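(* Let $D$ be a finite set of games between models $m_0,\dots,m_{k-1}$ such that there exists one model that has played every other model at least once in $D$. For a rating vector $\mathbf{R}=(R^{m_0},\dots,R^{m_{k-1}})\in\mathbb{R}^k$ define the logistic loss $$\mathcal{L}(D,\mathbf{R})=\sum_{g\in D}\Big[-g_r\log \operatorname{sig}\Big(\tfrac{R^{g_{m_a}}-R^{g_{m_b}}}{400}\Big)-(1-g_r)\log\Big(1-\operatorname{sig}\Big(\tfrac{R^{g_{m_a}}-R^{g_{m_b}}}{400}\Big)\Big)\Big],$$ with $\operatorname{sig}(x)=1/(1+e^{-x})$. If $\mathbf{R}_1$ and $\mathbf{R}_2$ both minimize $\mathbf{R}\mapsto\mathcal{L}(D,\mathbf{R})$ over $\mathbb{R}^k$, then $\mathbf{R}_1-\mathbf{R}_2$ is a constant vector (all its entries are equal).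
   Context: Each game $g\in D$ consists of two distinct models $g_{m_a},g_{m_b}$ among $m_0,\dots,m_{k-1}$ and a result $g_r\in\{0,\tfrac12,1\}$ ($1$ if $g_{m_a}$ wins, $0$ if it loses, $\tfrac12$ for a draw). *)

(* Defs.v *)
From mathcomp Require Import all_boot all_order all_algebra.
From mathcomp Require Import all_classical all_reals all_analysis.
Set Implicit Arguments. Unset Strict Implicit. Unset Printing Implicit Defensive.
Import Order.TTheory GRing.Theory Num.Theory.
Local Open Scope ring_scope.

(* A game between models 'I_k: model a, model b, result (score of a). *)
Record game (R : realType) (k : nat) := Game {
  g_ma : 'I_k;
  g_mb : 'I_k;
  g_r  : R }.

Definition sig (R : realType) (x : R) : R := 1 / (1 + expR (- x)).

Definition wf_game (R : realType) (k : nat) (g : game R k) : Prop :=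
  g_ma g != g_mb g /\ (g_r g = 0 \/ g_r g = 1 / 2 \/ g_r g = 1).

Definition wf_games (R : realType) (k : nat) (D : seq (game R k)) : Prop :=
  foldr (fun g P => wf_game g /\ P) True D.

Definition loss (R : realType) (k : nat) (D : seq (game R k)) (Rt : 'I_k -> R) : R :=
  \sum_(g <- D)
     (let p := sig ((Rt (g_ma g) - Rt (g_mb g)) / 400) in
      - g_r g * ln p - (1 - g_r g) * ln (1 - p)).

Definition has_hub (R : realType) (k : nat) (D : seq (game R k)) : Prop :=
  exists m : 'I_k, forall m' : 'I_k, m' != m ->
    has (fun g => ((g_ma g == m) && (g_mb g == m'))
                || ((g_ma g == m') && (g_mb g == m))) D.

Definition is_minimizer (R : realType) (k : nat) (D : seq (game R k)) (Rt : 'I_k -> R) : Prop :=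
  forall Rt' : 'I_k -> R, loss D Rt <= loss D Rt'.

(* Main.v *)
Require Import Defs.
From mathcomp Require Import all_boot all_order all_algebra.
From mathcomp Require Import all_classical all_reals all_analysis.
From mathcomp Require Import ring lra.
Import Order.TTheory GRing.Theory Num.Theory.
Local Open Scope ring_scope.

Section H.
Variable R : realType.
Definition hh (x : R) := ln (1 + expR x).

Lemma hh_conv (a b : R) :
  0 <= hh a + hh b - 2 * hh ((a + b) / 2) /\
  (hh a + hh b - 2 * hh ((a + b) / 2) = 0 -> a = b).
Proof.
set u := expR (a / 2); set v := expR (b / 2).
have ua : expR a = u * u by rewrite /u -expRD; congr expR; field.
have vb : expR b = v * v by rewrite /v -expRD; congr expR; field.
have uv : expR ((a + b) / 2) = u * v by rewrite /u /v -expRD; congr expR; field.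
have u0 : 0 < u by exact: expR_gt0.
have v0 : 0 < v by exact: expR_gt0.
have p1 : (1 + u * u) * (1 + v * v) \in Num.pos by rewrite posrE; nra.
have p2 : (1 + u * v) ^+ 2 \in Num.pos by rewrite posrE; nra.
have E : hh a + hh b - 2 * hh ((a + b) / 2) =
   ln ((1 + u * u) * (1 + v * v)) - ln ((1 + u * v) ^+ 2).
  rewrite /hh ua vb uv lnM ?posrE; try nra.
  rewrite lnXn; last nra.
  by rewrite mulr_natl.
have le : (1 + u * v) ^+ 2 <= (1 + u * u) * (1 + v * v).
  rewrite -subr_ge0.
  have -> : (1 + u * u) * (1 + v * v) - (1 + u * v) ^+ 2 = (u - v) ^+ 2 by ring.
  exact: sqr_ge0.
rewrite E; split.
  by rewrite subr_ge0 ler_ln.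
move/eqP; rewrite subr_eq0 => /eqP /ln_inj => H.
have : u = v.
  have H' := esym (H p1 p2).
  have E2 : (u - v) ^+ 2 = (1 + u * u) * (1 + v * v) - (1 + u * v) ^+ 2 by ring.
  move: E2; rewrite -H' subrr.
  by move/eqP; rewrite sqrf_eq0 subr_eq0 => /eqP.
rewrite /u /v => /expR_inj; lra.
Qed.

Definition TT (r x : R) := - r * ln (sig x) - (1 - r) * ln (1 - sig x).

Lemma TT_hh r x : TT r x = r * hh (- x) + (1 - r) * hh x.
Proof.
have e0 : 0 < expR x := expR_gt0 x.
have e1 : 0 < expR (- x) := expR_gt0 (- x).
have s1 : sig x = (1 + expR (- x))^-1 by rewrite /sig div1r.
have s2 : 1 - sig x = (1 + expR x)^-1.
  rewrite s1 expRN; field.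
  by rewrite !gt_eqF //; lra.
rewrite /TT s2 s1 !lnV ?posrE /hh; try lra.
Qed.

Lemma TT_conv (r x y : R) : 0 <= r <= 1 ->
  0 <= TT r x + TT r y - 2 * TT r ((x + y) / 2) /\
  (TT r x + TT r y - 2 * TT r ((x + y) / 2) = 0 -> x = y).
Proof.
move=> /andP [r0 r1].
have [A1 A2] := hh_conv (- x) (- y).
have [B1 B2] := hh_conv x y.
have e : - ((x + y) / 2) = (- x + - y) / 2 by field.
have -> : TT r x + TT r y - 2 * TT r ((x + y) / 2) =
  r * (hh (- x) + hh (- y) - 2 * hh ((- x + - y) / 2)) +
  (1 - r) * (hh x + hh y - 2 * hh ((x + y) / 2)).
  rewrite !TT_hh e; ring.
set a := hh (- x) + hh (- y) - 2 * hh ((- x + - y) / 2) in A1 A2 *.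
set b := hh x + hh y - 2 * hh ((x + y) / 2) in B1 B2 *.
have ra : 0 <= r * a by apply: mulr_ge0.
have rb : 0 <= (1 - r) * b by apply: mulr_ge0; lra.
split; first lra.
move=> h.
have ha : r * a = 0 by lra.
have hb : (1 - r) * b = 0 by lra.
have [rz|rnz] := eqVneq r 0.
  apply: B2; move: hb; rewrite rz subr0 mul1r //.
move: ha => /eqP; rewrite mulf_eq0 (negbTE rnz) /= => /eqP /A2; lra.
Qed.

Definition Tg {k : nat} (Rt : 'I_k -> R) (g : game R k) :=
  TT (g_r g) ((Rt (g_ma g) - Rt (g_mb g)) / 400).

Lemma lossE {k} (D : seq (game R k)) Rt : loss D Rt = \sum_(g <- D) Tg Rt g.
Proof. by []. Qed.

Lemma wf_r {k} {g : game R k} : wf_game g -> 0 <= g_r g <= 1.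
Proof. by move=> [_ [->|[->|->]]]; apply/andP; split; lra. Qed.

Lemma key k (D : seq (game R k)) (R1 R2 : 'I_k -> R) :
  wf_games D ->
  let M := fun i => (R1 i + R2 i) / 2 in
  let S := loss D R1 + loss D R2 - 2 * loss D M in
  0 <= S /\ (S <= 0 ->
    foldr (fun g P => R1 (g_ma g) - R1 (g_mb g) = R2 (g_ma g) - R2 (g_mb g) /\ P) True D).
Proof.
move=> + M S; rewrite /S {S}.
elim: D => [|g D IH] /=.
  by rewrite /loss !big_nil; split => //; lra.
move=> [wg wD]; have [IH1 IH2] := IH wD.
rewrite /loss !big_cons -!/(loss _ _) -!/(Tg _ g).
have eM : (M (g_ma g) - M (g_mb g)) / 400 =
   ((R1 (g_ma g) - R1 (g_mb g)) / 400 + (R2 (g_ma g) - R2 (g_mb g)) / 400) / 2.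
  rewrite /M; lra.
have [C1 C2] := TT_conv (g_r g) ((R1 (g_ma g) - R1 (g_mb g)) / 400)
                        ((R2 (g_ma g) - R2 (g_mb g)) / 400) (wf_r wg).
rewrite /Tg eM.
set d := TT _ _ + TT _ _ - _ in C1 C2.
set L := loss D R1 + loss D R2 - 2 * loss D M in IH1 IH2.
have -> : TT (g_r g) ((R1 (g_ma g) - R1 (g_mb g)) / 400) + loss D R1 +
     (TT (g_r g) ((R2 (g_ma g) - R2 (g_mb g)) / 400) + loss D R2) -
     2 * (TT (g_r g) (((R1 (g_ma g) - R1 (g_mb g)) / 400 + (R2 (g_ma g) - R2 (g_mb g)) / 400) / 2) + loss D M)
   = d + L by rewrite /d /L; ring.
split; first lra.
move=> h; split; last by apply: IH2; lra.
have := C2 ltac:(lra); lra.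
Qed.
End H.

Lemma has_fold (T : Type) (p : T -> bool) (P : T -> Prop) (D : seq T) :
  foldr (fun g Q => P g /\ Q) True D -> has p D -> exists g, p g /\ P g.
Proof.
elim: D => [|g D IH] //= [Pg FD] /orP [pg|hD]; first by exists g.
exact: IH.
Qed.

Theorem mainTheorem2 (R : realType) (k : nat) (D : seq (game R k))
  (hwf : wf_games D)
  (hhub : has_hub D)
  (R1 R2 : 'I_k -> R)
  (h1 : is_minimizer D R1) (h2 : is_minimizer D R2) :
  forall i j : 'I_k, R1 i - R2 i = R1 j - R2 j.
Proof.
have [C1 C2] := @key R k D R1 R2 hwf.
set M := fun i => (R1 i + R2 i) / 2 in C1 C2.
have := h1 M; have := h2 M => hM2 hM1.
have F := C2 ltac:(lra).
case: hhub => m Hm.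
suff E : forall i, R1 i - R2 i = R1 m - R2 m by move=> i j; rewrite !E.
move=> i; have [->//|ne] := eqVneq i m.
have [g [pg Pg]] := @has_fold _ _ (fun g => R1 (g_ma g) - R1 (g_mb g) = R2 (g_ma g) - R2 (g_mb g)) D F (Hm i ne).
move: pg => /orP [/andP [/eqP ea /eqP eb]|/andP [/eqP ea /eqP eb]];
  rewrite ea eb in Pg; lra.
Qed.
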